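(* For real parameters $\alpha,\beta\ge0$ define $\phi^{(\alpha,\beta)}=(\phi^{(\alpha,\beta)}_1,\phi^{(\alpha,\beta)}_2):\Omega_+^2\to\Omega_+^2$ by $$\phi^{(\alpha,\beta)}(x,y)=\left(y(I+\alpha xy)^{-1}(I+\beta xy),\; x(I+\beta yx)^{-1}(I+\alpha yx)\right).$$ For $x,y,z\in\Omega_+$ set $$F_{12}^{(\alpha,\beta)}(x,y,z)=\left(\phi_1^{(\alpha,\beta)}(x,y),\phi_2^{(\alpha,\beta)}(x,y),z\right),\quad F_{13}^{(\alpha,\gamma)}(x,y,z)=\left(\phi_1^{(\alpha,\gamma)}(x,z),y,\phi_2^{(\alpha,\gamma)}(x,z)\right),$$ $$F_{23}^{(\beta,\gamma)}(x,y,z)=\left(x,\phi_1^{(\beta,\gamma)}(y,z),\phi_2^{(\beta,\gamma)}(y,z)\right).$$ Then $\phi$ is a parametric Yang–Baxter map: for all $\alpha,\beta,\gamma\ge0$, $$F_{12}^{(\alpha,\beta)}\circ F_{13}^{(\alpha,\gamma)}\circ F_{23}^{(\beta,\gamma)}=F_{23}^{(\beta,\gamma)}\circ F_{13}^{(\alpha,\gamma)}\circ F_{12}^{(\alpha,\beta)}\quad\text{on }\Omega_+^3.$$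
   Context: Fix an integer $r\ge1$. $\Omega_+$ denotes the set of real symmetric positive definite $r\times r$ matrices and $I$ the identity matrix. For $\alpha,\beta\ge0$ the matrices $I+\alpha xy$ etc. are invertible for $x,y\in\Omega_+$, and $\phi^{(\alpha,\beta)}$ maps $\Omega_+^2$ into $\Omega_+^2$. *)

(* Defs.v *)
From mathcomp Require Import all_boot all_order all_algebra.
Set Implicit Arguments. Unset Strict Implicit. Unset Printing Implicit Defensive.
Import Order.TTheory GRing.Theory Num.Theory.
Local Open Scope ring_scope.

Definition posdef (R : realFieldType) (n : nat) (A : 'M[R]_n) : Prop :=
  A^T = A /\ forall v : 'cV[R]_n, v != 0 -> 0 < (v^T *m A *m v) 0 0.

Definition phi1 (R : realFieldType) (n : nat) (a b : R) (x y : 'M[R]_n) : 'M[R]_n :=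
  y *m invmx (1%:M + a *: (x *m y)) *m (1%:M + b *: (x *m y)).
Definition phi2 (R : realFieldType) (n : nat) (a b : R) (x y : 'M[R]_n) : 'M[R]_n :=
  x *m invmx (1%:M + b *: (y *m x)) *m (1%:M + a *: (y *m x)).

Definition F12 (R : realFieldType) (n : nat) (a b : R)
  (t : 'M[R]_n * 'M[R]_n * 'M[R]_n) : 'M[R]_n * 'M[R]_n * 'M[R]_n :=
  let: (x, y, z) := t in (phi1 a b x y, phi2 a b x y, z).
Definition F13 (R : realFieldType) (n : nat) (a c : R)
  (t : 'M[R]_n * 'M[R]_n * 'M[R]_n) : 'M[R]_n * 'M[R]_n * 'M[R]_n :=
  let: (x, y, z) := t in (phi1 a c x z, y, phi2 a c x z).
Definition F23 (R : realFieldType) (n : nat) (b c : R)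
  (t : 'M[R]_n * 'M[R]_n * 'M[R]_n) : 'M[R]_n * 'M[R]_n * 'M[R]_n :=
  let: (x, y, z) := t in (x, phi1 b c y z, phi2 b c y z).

(* Main.v *)
Require Import Defs.
From mathcomp Require Import all_boot all_order all_algebra lra.
Import Order.TTheory GRing.Theory Num.Theory.
Set Implicit Arguments. Unset Strict Implicit. Unset Printing Implicit Defensive.
Local Open Scope ring_scope.


Definition qf (R : realFieldType) (n : nat) (A : 'M[R]_n) (v : 'cV[R]_n) : R :=
  (v^T *m A *m v) 0 0.

Lemma qfD (R : realFieldType) n (A B : 'M[R]_n) v : qf (A + B) v = qf A v + qf B v.
Proof. by rewrite /qf mulmxDr mulmxDl mxE. Qed.

Lemma qfZ (R : realFieldType) n (c : R) (A : 'M[R]_n) v : qf (c *: A) v = c * qf A v.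
Proof. by rewrite /qf -scalemxAr -scalemxAl mxE. Qed.

Lemma qf_conj (R : realFieldType) n (G A : 'M[R]_n) v :
  qf (G^T *m A *m G) v = qf A (G *m v).
Proof. by rewrite /qf trmx_mul !mulmxA. Qed.

Lemma qf_ker (R : realFieldType) n (A B : 'M[R]_n) v :
  B *m v = 0 -> qf (A *m B) v = 0.
Proof. by move=> h; rewrite /qf -!mulmxA h !mulmx0 mxE. Qed.

Lemma qf0 (R : realFieldType) n (A : 'M[R]_n) : qf A 0 = 0.
Proof. by rewrite /qf mulmx0 mxE. Qed.

Lemma pd_ge0 (R : realFieldType) n (A : 'M[R]_n) v : posdef A -> 0 <= qf A v.
Proof.
case=> _ h; have [->|nz] := eqVneq v 0; first by rewrite qf0.
exact/ltW/h.
Qed.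

Lemma unit_of_inj (R : realFieldType) n (A : 'M[R]_n) :
  (forall v : 'cV[R]_n, A *m v = 0 -> v = 0) -> A \in unitmx.
Proof.
move=> h; rewrite -unitmx_tr unitmxE unitfE; apply/negP => /det0P [v nz vA].
have : A *m v^T = 0 by rewrite -[A]trmxK -trmx_mul vA trmx0.
move/h => /(congr1 trmx); rewrite trmxK trmx0 => v0.
by rewrite v0 eqxx in nz.
Qed.

Lemma pd_unit (R : realFieldType) n (A : 'M[R]_n) : posdef A -> A \in unitmx.
Proof.
move=> [_ h]; apply: unit_of_inj => v Av; apply/eqP; apply: contraT => nz.
have := h v nz; rewrite /qf -mulmxA Av mulmx0 mxE ltxx //.
Qed.


Lemma pd_sym (R : realFieldType) n (A : 'M[R]_n) : posdef A -> A^T = A.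
Proof. by case. Qed.

Lemma pd_gt0 (R : realFieldType) n (A : 'M[R]_n) v : posdef A -> v != 0 -> 0 < qf A v.
Proof. by case=> _ h; apply: h. Qed.

Lemma mxunitE (R : realFieldType) n (A : 'M[R]_n.+1) : (A \is a GRing.unit) = (A \in unitmx).
Proof. by []. Qed.

Lemma pd_inv (R : realFieldType) n (q : 'M[R]_n.+1) : posdef q -> posdef q^-1.
Proof.
move=> hq; have uq : q \is a GRing.unit by apply: pd_unit.
split; first by rewrite -[q^-1]/(invmx q) trmx_inv pd_sym.
move=> v nz; change (0 < qf q^-1 v).
have -> : q^-1 = (q^-1)^T *m q *m q^-1.
  by rewrite -[q^-1]/(invmx q) trmx_inv pd_sym // mulmxE -[invmx q]/(q^-1) mulVr ?mul1r.
rewrite qf_conj; apply: pd_gt0 => //; apply: contra nz => /eqP h.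
by rewrite -[v](mul1mx) -[1%:M]/(1 : 'M_n.+1) -(divrr uq) -mulmxE -mulmxA h mulmx0.
Qed.

Lemma unitI (R : realFieldType) n (a : R) (x y : 'M[R]_n.+1) :
  posdef x -> posdef y -> 0 <= a -> (1 + a *: (x * y)) \is a GRing.unit.
Proof.
move=> hx hy ha; apply: unit_of_inj => v hv; apply/eqP; apply: contraT => nz.
have := qf_ker y hv.
have -> : y *m (1 + a *: (x * y)) = y + a *: (y^T *m x *m y).
  by rewrite (pd_sym hy) mulmxE mulrDr mulr1 scalerAr mulrA scalerAr.
rewrite (qfD (y : 'M_n.+1)) qfZ qf_conj => h.
have h1 := pd_gt0 hy nz; have h3 := mulr_ge0 ha (pd_ge0 (y *m v) hx); lra.
Qed.


Lemma commZ (R : realFieldType) n (c : R) (x y : 'M[R]_n.+1) :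
  GRing.comm x y -> GRing.comm x (c *: y).
Proof. by move=> h; rewrite /GRing.comm -scalerAr -scalerAl h. Qed.

Lemma commI (R : realFieldType) n (c : R) (x y : 'M[R]_n.+1) :
  GRing.comm x y -> GRing.comm x (1 + c *: y).
Proof. by move=> h; apply: commrD; [apply: commr1 | apply: commZ]. Qed.

Lemma commII (R : realFieldType) n (a b : R) (A : 'M[R]_n.+1) :
  GRing.comm (1 + a *: A) (1 + b *: A).
Proof. apply: commI; apply: commr_sym; apply: commI; exact: commr_refl. Qed.

Lemma push (R : realFieldType) n (c : R) (x y : 'M[R]_n.+1) :
  x * (1 + c *: (y * x)) = (1 + c *: (x * y)) * x.
Proof. by rewrite mulrDr mulr1 mulrDl mul1r -scalerAr -scalerAl mulrA. Qed.

Lemma pushV (R : realFieldType) n (x I J : 'M[R]_n.+1) :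
  I \is a GRing.unit -> J \is a GRing.unit -> x * J = I * x -> x * J^-1 = I^-1 * x.
Proof.
move=> uI uJ h; apply: (mulrI uI).
by rewrite [LHS]mulrA -h mulrK // mulVKr.
Qed.

Definition LL (R : realFieldType) n (p : 'M[R]_n.+1) (a : R) (q : 'M[R]_n.+1) (b : R) :=
  (p * q, a *: p + q^-1, b *: q + p^-1, p^-1 * q^-1).

Lemma pairLL (R : realFieldType) n (a b : R) (x y : 'M[R]_n.+1) :
  x \is a GRing.unit -> y \is a GRing.unit ->
  (1 + a *: (x * y)) \is a GRing.unit -> (1 + b *: (x * y)) \is a GRing.unit ->
  (1 + a *: (y * x)) \is a GRing.unit -> (1 + b *: (y * x)) \is a GRing.unit ->
  LL (y * (1 + a *: (x * y))^-1 * (1 + b *: (x * y))) a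
     (x * (1 + b *: (y * x))^-1 * (1 + a *: (y * x))) b = LL y b x a.
Proof.
move=> ux uy uIa uIb uJa uJb.
set A : 'M[R]_n.+1 := x * y. set Ia : 'M[R]_n.+1 := 1 + a *: A. set Ib : 'M[R]_n.+1 := 1 + b *: A.
set Ja : 'M[R]_n.+1 := 1 + a *: (y * x). set Jb : 'M[R]_n.+1 := 1 + b *: (y * x).
have hv : x * Jb^-1 * Ja = Ib^-1 * Ia * x.
  by rewrite /Ja (pushV uIb uJb (push _ _ _)) -[LHS]mulrA push -[RHS]mulrA.
rewrite hv; set u := y * Ia^-1 * Ib; set v := Ib^-1 * Ia * x.
have cab : GRing.comm Ia Ib by apply: commII.
have cabV : GRing.comm Ia^-1 Ib by apply/commr_sym/commrV/commr_sym.
have uu : u \is a GRing.unit by rewrite !unitrMl ?unitrV.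
have uv : v \is a GRing.unit by rewrite !unitrMl ?unitrV.
have uinv : u^-1 = Ib^-1 * Ia * y^-1.
  by rewrite /u invrM ?unitrMl ?unitrV // invrM ?unitrV // invrK mulrA.
have vinv : v^-1 = x^-1 * Ia^-1 * Ib.
  by rewrite /v invrM ?unitrMl ?unitrV // invrM ?unitrV // invrK mulrA.
have cAa : GRing.comm A Ia^-1 by apply: commrV; rewrite /Ia; apply: commI; exact: commr_refl.
have cAb : GRing.comm A Ib by rewrite /Ib; apply: commI; exact: commr_refl.
have e1 : u * v = y * x.
  by rewrite /u /v -!mulrA (mulrA Ib) mulrV // mul1r mulKr.
have e2 : a *: u + v^-1 = b *: y + x^-1.
  rewrite vinv /u scalerAl scalerAl -mulrDl -mulrDl.
  have -> : a *: y + x^-1 = x^-1 * Ia by rewrite /Ia mulrDr mulr1 -scalerAr mulKr // addrC.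
  by rewrite mulrK // /Ib mulrDr mulr1 -scalerAr mulKr // addrC.
have e3 : b *: v + u^-1 = a *: x + y^-1.
  rewrite uinv /v scalerAr -mulrDr.
  have -> : b *: x + y^-1 = Ib * y^-1 by rewrite /Ib mulrDl mul1r -scalerAl mulrK // addrC.
  rewrite mulrA -(mulrA Ib^-1) cab mulKr //.
  by rewrite /Ia mulrDl mul1r -scalerAl mulrK // addrC.
have e4 : u^-1 * v^-1 = y^-1 * x^-1.
  rewrite -invrM // -invrM //.
  congr (_^-1); rewrite /u /v -!mulrA (mulrA x) -/A.
  by rewrite (mulrA A) cAa -mulrA (mulrA Ia) mulrV // mul1r cAb mulKr.
by rewrite /LL e1 e2 e3 e4.
Qed.


Definition Inv (R : realFieldType) n (p : 'M[R]_n.+1) (a : R) (q : 'M[R]_n.+1) (b : R)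
  (r : 'M[R]_n.+1) (c : R) :=
  (p * q * r, c *: r + a *: p + q^-1, (a * b) *: (p * q) + a *: (p * r^-1) + q^-1 * r^-1,
   b *: q + p^-1 + r^-1, p^-1 * q^-1 * r^-1).

Definition InvLf (R : realFieldType) n (t : 'M[R]_n.+1 * 'M[R]_n.+1 * 'M[R]_n.+1 * 'M[R]_n.+1)
  (k : R) (r : 'M[R]_n.+1) (c : R) :=
  let: (A, B, C, D) := t in
    (A * r, c *: r + B, k *: A + B * r^-1, C + r^-1, D * r^-1).
Definition InvRf (R : realFieldType) n (p : 'M[R]_n.+1) (a : R)
  (t : 'M[R]_n.+1 * 'M[R]_n.+1 * 'M[R]_n.+1 * 'M[R]_n.+1) :=
  let: (A, B, C, D) := t in
    (p * A, a *: p + C, a *: (p * B) + D, p^-1 + B, p^-1 * D).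

Lemma InvL_eq (R : realFieldType) n (p : 'M[R]_n.+1) a q b r c :
  Inv p a q b r c = InvLf (LL p a q b) (a * b) r c.
Proof. by rewrite /Inv /InvLf /LL /= mulrDl -scalerAl !addrA. Qed.

Lemma InvR_eq (R : realFieldType) n (p : 'M[R]_n.+1) a q b r c :
  Inv p a q b r c = InvRf p a (LL q b r c).
Proof.
rewrite /Inv /InvRf /LL /= !mulrA mulrDr -scalerAr scalerDr scalerA.
by rewrite (addrCA (a *: p)) (addrCA p^-1) !addrA.
Qed.

Lemma InvL (R : realFieldType) n (p p' q q' r : 'M[R]_n.+1) a a' b b' c :
  LL p a q b = LL p' a' q' b' -> a * b = a' * b' ->
  Inv p a q b r c = Inv p' a' q' b' r c.
Proof. by move=> h hab; rewrite InvL_eq [RHS]InvL_eq h hab. Qed.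

Lemma InvR (R : realFieldType) n (p q q' r r' : 'M[R]_n.+1) a b b' c c' :
  LL q b r c = LL q' b' r' c' ->
  Inv p a q b r c = Inv p a q' b' r' c'.
Proof. by move=> h; rewrite InvR_eq [RHS]InvR_eq h. Qed.


Lemma zeq (R : realFieldType) n (X Y Z P S2 S3 S5 S6 : 'M[R]_n.+1) a b c :
  Z \is a GRing.unit ->
  Inv X a Y b Z c = (P, S2, S3, S5, S6) -> (S3 + c *: 1) * Z = (a * b) *: P + S2.
Proof.
move=> uZ; rewrite /Inv; case=> <- <- <- _ _.
rewrite !mulrDl -!scalerAl !mulrVK // mul1r -!addrA; congr (_ + _).
by rewrite (addrC Y^-1) addrCA.
Qed.

Lemma xeq (R : realFieldType) n (X Y Z P S2 S3 S5 S6 : 'M[R]_n.+1) a b c :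
  X \is a GRing.unit ->
  Inv X a Y b Z c = (P, S2, S3, S5, S6) -> X * (a *: S5 + S6) = S3 + a *: 1.
Proof.
move=> uX; rewrite /Inv; case=> _ _ <- <- <-.
rewrite mulrDr -scalerAr !mulrDr -scalerAr mulrV // !mulrA mulrV // mul1r.
rewrite !scalerDr scalerA -!addrA; congr (_ + _).
by rewrite addrC -addrA.
Qed.

Lemma uniq3 (R : realFieldType) n (X Y Z X' Y' Z' P S2 S3 S5 S6 : 'M[R]_n.+1) a b c :
  X \is a GRing.unit -> Z \is a GRing.unit -> X' \is a GRing.unit -> Z' \is a GRing.unit ->
  Inv X a Y b Z c = (P, S2, S3, S5, S6) -> Inv X' a Y' b Z' c = (P, S2, S3, S5, S6) ->
  (S3 + c *: 1) \is a GRing.unit -> (a *: S5 + S6) \is a GRing.unit ->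
  X = X' /\ Y = Y' /\ Z = Z'.
Proof.
move=> uX uZ uX' uZ' h1 h2 u3 u5.
have eZ : Z = Z' by apply: (mulrI u3); rewrite (zeq uZ h1) (zeq uZ' h2).
have eX : X = X' by apply: (mulIr u5); rewrite (xeq uX h1) (xeq uX' h2).
split => //; split => //.
move: h1 h2 => [e1 _ _ _ _] [e2 _ _ _ _].
subst X' Z'; apply: (mulrI uX); apply: (mulIr uZ); by rewrite e1 e2.
Qed.


Lemma trI (R : realFieldType) n (c : R) (x y : 'M[R]_n.+1) :
  posdef x -> posdef y -> (1 + c *: (x * y))^T = 1 + c *: (y * x).
Proof.
move=> hx hy; rewrite linearD linearZ /= -[1]/(1%:M : 'M[R]_n.+1) trmx1.
by rewrite -mulmxE trmx_mul (pd_sym hx) (pd_sym hy).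
Qed.

Lemma trM (R : realFieldType) n (x y : 'M[R]_n.+1) : (x * y)^T = y^T * x^T.
Proof. exact: trmx_mul. Qed.

Lemma qfDr (R : realFieldType) n (A B : 'M[R]_n.+1) v : qf (A + B) v = qf A v + qf B v.
Proof. exact: qfD. Qed.
Lemma qfZr (R : realFieldType) n c (A : 'M[R]_n.+1) v : qf (c *: A) v = c * qf A v.
Proof. exact: qfZ. Qed.
Lemma qf_conjr (R : realFieldType) n (G A : 'M[R]_n.+1) v : qf (G^T * A * G) v = qf A (G *m v).
Proof. exact: qf_conj. Qed.

Lemma Wunit (R : realFieldType) n (a b : R) (p q r : 'M[R]_n.+1) :
  posdef p -> posdef q -> posdef r -> 0 <= a -> 0 <= b ->
  ((a * b) *: (p * q * r) + a *: p + a *: r + q^-1) \is a GRing.unit.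
Proof.
move=> hp hq hr ha hb; have uq : q \is a GRing.unit by apply: pd_unit.
apply: unit_of_inj => v hv; apply/eqP; apply: contraT => nz.
set G : 'M[R]_n.+1 := 1 + b *: (q * r).
set Gt : 'M[R]_n.+1 := 1 + b *: (r * q).
have eG : Gt = G^T by rewrite /G trI.
have e : Gt * ((a * b) *: (p * q * r) + a *: p + a *: r + q^-1) =
    a *: (G^T * p * G) + (a *: r + q^-1) + b *: (a *: (r^T * q * r) + r).
  rewrite -eG (pd_sym hr).
  have -> : (a * b) *: (p * q * r) + a *: p + a *: r + q^-1 = a *: (p * G) + (a *: r + q^-1).
    by rewrite /G mulrDr mulr1 -scalerAr scalerDr scalerA mulrA addrA (addrC (a *: p)).
  rewrite mulrDr -scalerAr mulrA -addrA; congr (_ + _).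
  rewrite {1}/Gt mulrDl mul1r; congr (_ + _).
  by rewrite -scalerAl mulrDr -scalerAr mulrK // scalerDr scalerA mulrA.
have := qf_ker Gt hv; rewrite mulmxE e !qfDr !qfZr !qf_conjr => h.
have h1 := pd_gt0 (pd_inv hq) nz.
have h2 := mulr_ge0 ha (pd_ge0 (G *m v) hp).
have h3 := mulr_ge0 ha (pd_ge0 v hr).
have h4 := mulr_ge0 hb (mulr_ge0 ha (pd_ge0 (r *m v) hq)).
have h5 := mulr_ge0 hb (pd_ge0 v hr).
move: h; rewrite qfDr qfZr qf_conjr mulrDr; lra.
Qed.

Lemma phi_pd (R : realFieldType) n (a b : R) (x y : 'M[R]_n.+1) :
  posdef x -> posdef y -> 0 <= a -> 0 <= b ->
  posdef (y * (1 + a *: (x * y))^-1 * (1 + b *: (x * y))).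
Proof.
move=> hx hy ha hb.
have uIa := unitI hx hy ha; have uIb := unitI hx hy hb.
have uJa := unitI hy hx ha; have uJb := unitI hy hx hb.
have hV : y * (1 + a *: (x * y))^-1 = (1 + a *: (y * x))^-1 * y.
  exact: pushV uJa uIa (push a y x).
have cabV : GRing.comm (1 + a *: (x * y))^-1 (1 + b *: (x * y)).
  by apply/commr_sym/commrV/commr_sym/commII.
split.
  rewrite !trM trmxV !trI // (pd_sym hy) -hV mulrA -(push b y x) -mulrA -cabV.
  by rewrite mulrA.
move=> v nz; change (0 < qf (y * (1 + a *: (x * y))^-1 * (1 + b *: (x * y))) v).
set w := (1 + a *: (x * y))^-1 *m v.
have ev : v = (1 + a *: (x * y)) *m w by rewrite /w mulmxA mulmxE mulrV // mul1mx.
have wnz : w != 0 by apply: contra nz => /eqP w0; rewrite ev w0 mulmx0.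
rewrite ev -qf_conjr trI // !mulrA -(push a y x) mulrK //.
have -> : y * (1 + b *: (x * y)) * (1 + a *: (x * y)) =
   y + b *: (y^T * x * y) + (a *: (y^T * x * y) + (b * a) *: ((x * y)^T * y * (x * y))).
  by rewrite trM (pd_sym hx) (pd_sym hy) !mulrDr !mulr1 mulrDl -!scalerAr -scalerAl scalerA !mulrA (mulrC a b).
rewrite !qfDr !qfZr !qf_conjr.
have h1 := pd_gt0 hy wnz.
have h2 := mulr_ge0 hb (pd_ge0 (y *m w) hx).
have h3 := mulr_ge0 ha (pd_ge0 (y *m w) hx).
have h4 := mulr_ge0 (mulr_ge0 hb ha) (pd_ge0 ((x * y) *m w) hy).
lra.
Qed.


Lemma pair_pd (R : realFieldType) n (a b : R) (x y : 'M[R]_n.+1) :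
  posdef x -> posdef y -> 0 <= a -> 0 <= b ->
  [/\ posdef (phi1 a b x y), posdef (phi2 a b x y) &
      LL y b x a = LL (phi1 a b x y) a (phi2 a b x y) b].
Proof.
move=> hx hy ha hb; split.
- exact: phi_pd.
- exact: phi_pd.
- symmetry; apply: pairLL; [exact: pd_unit|exact: pd_unit|exact: unitI..].
Qed.

Lemma K3unit (R : realFieldType) n (a b : R) (x y z : 'M[R]_n.+1) :
  posdef x -> posdef y -> posdef z -> 0 <= a -> 0 <= b ->
  ((a * b) *: (z * y) + a *: (z * x^-1) + y^-1 * x^-1 + a *: 1) \is a GRing.unit.
Proof.
move=> hx hy hz ha hb; have ux : x \is a GRing.unit by apply: pd_unit.
have -> : (a * b) *: (z * y) + a *: (z * x^-1) + y^-1 * x^-1 + a *: 1 =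
   ((a * b) *: (z * y * x) + a *: z + a *: x + y^-1) * x^-1.
  by rewrite !mulrDl -!scalerAl mulrK // mulrV // addrAC.
by rewrite unitrMl ?unitrV //; apply: Wunit.
Qed.

Lemma K5unit (R : realFieldType) n (a b : R) (x y z : 'M[R]_n.+1) :
  posdef x -> posdef y -> posdef z -> 0 <= a -> 0 <= b ->
  (a *: (b *: y + z^-1 + x^-1) + z^-1 * y^-1 * x^-1) \is a GRing.unit.
Proof.
move=> hx hy hz ha hb; have ux : x \is a GRing.unit by apply: pd_unit.
have uz : z \is a GRing.unit by apply: pd_unit.
have -> : a *: (b *: y + z^-1 + x^-1) + z^-1 * y^-1 * x^-1 =
   z^-1 * ((a * b) *: (z * y * x) + a *: z + a *: x + y^-1) * x^-1.
  rewrite !mulrDr !mulrDl scalerDr scalerDr scalerA -!scalerAr -!scalerAl !mulrA.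
  rewrite !mulrK // !mulVr // !mul1r; congr (_ + _).
  by rewrite addrAC.
by rewrite unitrMl ?unitrMr ?unitrV //; apply: Wunit.
Qed.

Unset Implicit Arguments.

Theorem theorem3 (R : realFieldType) (r : nat) (r_ge1 : (1 <= r)%N)
  (alpha beta gamma : R) (ha : 0 <= alpha) (hb : 0 <= beta) (hc : 0 <= gamma)
  (x y z : 'M[R]_r) (hx : posdef x) (hy : posdef y) (hz : posdef z) :
  F12 alpha beta (F13 alpha gamma (F23 beta gamma (x, y, z)))
  = F23 beta gamma (F13 alpha gamma (F12 alpha beta (x, y, z))).
Proof.
case: r r_ge1 x y z hx hy hz => // n _ x y z hx hy hz.
rewrite /F12 /F13 /F23 /=.
have [py1 pz1 e1] := pair_pd hy hz hb hc.
set y1 := phi1 beta gamma y z; set z1 := phi2 beta gamma y z.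
have [px2 pz2 e2] := pair_pd hx pz1 ha hc.
set x2 := phi1 alpha gamma x z1; set z2 := phi2 alpha gamma x z1.
have [px3 py3 e3] := pair_pd px2 py1 ha hb.
set x3 := phi1 alpha beta x2 y1; set y3 := phi2 alpha beta x2 y1.
have [qx1 qy1 f1] := pair_pd hx hy ha hb.
set x1' := phi1 alpha beta x y; set y1' := phi2 alpha beta x y.
have [qx2 qz2 f2] := pair_pd qx1 hz ha hc.
set x2' := phi1 alpha gamma x1' z; set z2' := phi2 alpha gamma x1' z.
have [qy3 qz3 f3] := pair_pd qy1 qz2 hb hc.
set y3' := phi1 beta gamma y1' z2'; set z3' := phi2 beta gamma y1' z2'.
have hL : Inv x3 alpha y3 beta z2 gamma = Inv z gamma y beta x alpha.
  by rewrite (InvL _ _ e1 (mulrC _ _)) (InvR _ _ e2) (InvL _ _ e3 (mulrC _ _)).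
have hR : Inv x2' alpha y3' beta z3' gamma = Inv z gamma y beta x alpha.
  by rewrite (InvR _ _ f1) (InvL _ _ f2 (mulrC _ _)) (InvR _ _ f3).
have u3 := K3unit hx hy hz hc hb.
have u5 := K5unit hx hy hz ha hb.
case E: (Inv z gamma y beta x alpha) hL hR => [[[[P S2] S3] S5] S6] hL hR.
move: E; rewrite /Inv; case=> _ _ eS3 eS5 eS6.
rewrite eS3 in u3; rewrite eS5 eS6 in u5.
have := uniq3 (pd_unit px3) (pd_unit pz2) (pd_unit qx2) (pd_unit qz3) hL hR u3 u5.
move=> [E1 [E2 E3]]; f_equal; [f_equal|]; assumption.
Qed.
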